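(* Let $R_0=\mathrm{diag}(1,1,1)$, $R_1=\mathrm{diag}(1,-1,-1)$, $R_2=\mathrm{diag}(-1,1,-1)$, $R_3=\mathrm{diag}(-1,-1,1)$, and for $j\in\{0,1,2,3\}$ let $$U_j=\{R_je^{\Lambda(\omega)}:\omega\in\mathbb{R}^3,\ \|\omega\|_2<\pi\}\subset SO(3),\qquad \mathcal{U}_j=\Big\{\begin{bmatrix}R&p\\0&1\end{bmatrix}: R\in U_j,\ p\in\mathbb{R}^3\Big\}\subset SE(3).$$ Then $U_0\cup U_1\cup U_2\cup U_3=SO(3)$ and $\mathcal{U}_0\cup\mathcal{U}_1\cup\mathcal{U}_2\cup\mathcal{U}_3=SE(3)$.
   Context: $SO(3)=\{R\in\mathbb{R}^{3\times3}:R^\top R=I,\det R=1\}$, $SE(3)=\{\begin{bmatrix}R&p\\0&1\end{bmatrix}:R\in SO(3),p\in\mathbb{R}^3\}$. For $\omega\in\mathbb{R}^3$, $\Lambda(\omega)=\begin{bmatrix}0&-\omega_3&\omega_2\\\omega_3&0&-\omega_1\\-\omega_2&\omega_1&0\end{bmatrix}$, and $e^{(\cdot)}$ is the matrix exponential. *)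

(* Defs.v *)
From HB Require Import structures.
From mathcomp Require Import all_boot all_order all_algebra.
From mathcomp Require Import all_classical all_reals all_analysis.
Set Implicit Arguments. Unset Strict Implicit. Unset Printing Implicit Defensive.
Import Order.TTheory GRing.Theory Num.Theory.
Import numFieldNormedType.Exports.
Local Open Scope classical_set_scope.
Local Open Scope ring_scope.

Definition Lambda (R : realType) (w : 'cV[R]_3) : 'M[R]_3 :=
  \matrix_(i < 3, j < 3)
    (if (val i == 0%N) && (val j == 1%N) then - w 2%:R 0
     else if (val i == 0%N) && (val j == 2%N) then w 1%:R 0
     else if (val i == 1%N) && (val j == 0%N) then w 2%:R 0
     else if (val i == 1%N) && (val j == 2%N) then - w 0 0
     else if (val i == 2%N) && (val j == 0%N) then - w 1%:R 0
     else if (val i == 2%N) && (val j == 1%N) then w 0 0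
     else 0).

Definition expmx (R : realType) (n : nat) (A : 'M[R]_n.+1) : 'M[R]_n.+1 :=
  lim (series (fun k : nat => (k`!%:R)^-1 *: A ^+ k) @ \oo).

Definition norm2 (R : realType) (w : 'cV[R]_3) : R :=
  Num.sqrt (\sum_(i < 3) w i 0 ^+ 2).

Definition SO3 (R : realType) : set 'M[R]_3 :=
  [set Q | Q^T *m Q = 1%:M /\ \det Q = 1].

Definition SE3 (R : realType) : set 'M[R]_(3 + 1) :=
  [set T | exists (Q : 'M[R]_3) (p : 'cV[R]_3),
      @SO3 R Q /\ T = block_mx Q p 0 1%:M].

(* R_0 = diag(1,1,1), R_1 = diag(1,-1,-1), R_2 = diag(-1,1,-1), R_3 = diag(-1,-1,1) *)
Definition Rj (R : realType) (j : 'I_4) : 'M[R]_3 :=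
  diag_mx (\row_(i < 3)
    (if (val j == 0%N) || (val i == (val j).-1) then 1 else -1)).

Definition Uj (R : realType) (j : 'I_4) : set 'M[R]_3 :=
  [set @Rj R j *m expmx (Lambda w) | w in [set w : 'cV[R]_3 | norm2 w < pi]].

Definition calUj (R : realType) (j : 'I_4) : set 'M[R]_(3 + 1) :=
  [set T | exists (Q : 'M[R]_3) (p : 'cV[R]_3),
      @Uj R j Q /\ T = block_mx Q p 0 1%:M].

(* Main.v *)
Require Import Defs.
From HB Require Import structures.
From mathcomp Require Import all_boot all_order all_algebra.
From mathcomp Require Import all_classical all_reals all_analysis.
From mathcomp Require Import ring lra.
Import Order.TTheory GRing.Theory Num.Theory.
Import numFieldNormedType.Exports.
Local Open Scope classical_set_scope.
Local Open Scope ring_scope.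

Section S.
Variable R : realType.
Lemma cvg_sin_series (x : R) : series (sin_coeff x) @ \oo --> sin x.
Proof. rewrite sin.unlock. exact: is_cvg_series_sin_coeff. Qed.
Lemma cvg_cos_series (x : R) : series (cos_coeff x) @ \oo --> cos x.
Proof. rewrite cos.unlock. exact: is_cvg_series_cos_coeff. Qed.

Lemma sc_even (a b : R) m : b^-1 * a * (-1)^+m = - (1 * (-1)^+m.+1 * a / b).
Proof. rewrite exprS. ring. Qed.
Lemma sc_odd (a b c : R) : b^-1 * a * c = 1 * c * a / b.
Proof. ring. Qed.

Lemma powB (B : 'M[R]_3) : B ^+ 3 = - B -> forall m,
  B ^+ (m.*2.+1) = (-1) ^+ m *: B /\ B ^+ (m.*2.+2) = (-1) ^+ m *: B ^+ 2.
Proof.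
move=> HB; elim=> [|m [IH1 IH2]]; first by rewrite !expr0 !scale1r.
have E1 : B ^+ (m.+1).*2.+1 = (-1) ^+ m.+1 *: B.
  rewrite doubleS exprS IH2 -scalerAr -exprS HB exprS mulN1r scaleNr scalerN //.
split => //.
by rewrite exprS E1 -scalerAr -expr2.
Qed.

Lemma term_eq (B : 'M[R]_3) (th : R) : B ^+ 3 = - B -> forall k,
  (k`!%:R)^-1 *: (th *: B) ^+ k =
  (k == 0)%:R *: (1 + B ^+ 2) + sin_coeff th k *: B - cos_coeff th k *: B ^+ 2.
Proof.
move=> HB [|k].
  rewrite expr0 /sin_coeff /cos_coeff /= !expr0 !mul1r !mul0r scale0r addr0 invr1 scale1r. by rewrite ?mulr1n !scale1r addrK.
rewrite -[k]odd_double_half; case: (odd k) => /=.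
- rewrite add1n; have [_ E] := powB B HB k./2.
  rewrite /sin_coeff /cos_coeff /= odd_double /= exprZn E scalerA.
  rewrite -!exprnP ?uphalf_double ?doubleK !mulr0n !mul0r !scale0r ?add0r ?subr0 scalerA.
  rewrite -scaleNr; congr (_ *: _); exact: sc_even.
- rewrite add0n; have [E _] := powB B HB k./2.
  rewrite /sin_coeff /cos_coeff /= odd_double /= exprZn E scalerA.
  rewrite -!exprnP ?uphalf_double ?doubleK !mulr0n !mul0r !scale0r ?add0r ?subr0 scalerA.
  congr (_ *: _); ring.
Qed.

Lemma series_term (B : 'M[R]_3) (th : R) : B ^+ 3 = - B -> forall n,
  series (fun k : nat => (k`!%:R)^-1 *: (th *: B) ^+ k) n.+1 =
  (1 + B ^+ 2) + series (sin_coeff th) n.+1 *: B - series (cos_coeff th) n.+1 *: B ^+ 2.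
Proof.
move=> HB n; rewrite /series /=.
under eq_bigr do rewrite term_eq //.
rewrite sumrB big_split /= -!scaler_suml; congr (_ + _ - _).
rewrite big_nat_recl // eqxx big1 ?addr0 ?scale1r //.
Qed.

Lemma rodrigues (B : 'M[R]_3) (th : R) : B ^+ 3 = - B ->
  expmx (th *: B) = 1 + sin th *: B + (1 - cos th) *: B ^+ 2.
Proof.
move=> HB; rewrite /expmx; apply: cvg_lim; first exact: norm_hausdorff.
have -> : 1 + sin th *: B + (1 - cos th) *: B ^+ 2 =
  (1 + B ^+ 2) + sin th *: B - cos th *: B ^+ 2.
  by apply/matrixP => i j; rewrite !mxE; ring.
set f := (fun k : nat => _).
have H : [sequence series f n.+1]_n @ \oo --> (1 + B ^+ 2) + sin th *: B - cos th *: B ^+ 2.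
  rewrite (_ : [sequence series f n.+1]_n = (fun n => (1 + B ^+ 2) + series (sin_coeff th) n.+1 *: B - series (cos_coeff th) n.+1 *: B ^+ 2)); last by apply/funext => n; exact: series_term.
  apply: cvgB; first apply: cvgD; first exact: cvg_cst.
  - apply: cvgZr_tmp; rewrite (cvg_shiftS (series (sin_coeff th))); exact: cvg_sin_series.
  - apply: cvgZr_tmp; rewrite (cvg_shiftS (series (cos_coeff th))); exact: cvg_cos_series.
by move: H; rewrite cvg_shiftS.
Qed.
Definition o0 : 'I_3 := @Ordinal 3 0 isT.
Definition o1 : 'I_3 := @Ordinal 3 1 isT.
Definition o2 : 'I_3 := @Ordinal 3 2 isT.

Definition mk3 (a b c d e f g h k : R) : 'M[R]_3 :=
  \matrix_(i, j) nth 0 (nth [::] [:: [:: a; b; c]; [:: d; e; f]; [:: g; h; k]] i) j.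

Ltac ord3 i := case: i => [ [|[|[|?]]] ?] //.

Lemma mk3E (A : 'M[R]_3) : A = mk3 (A o0 o0) (A o0 o1) (A o0 o2) (A o1 o0) (A o1 o1) (A o1 o2)
  (A o2 o0) (A o2 o1) (A o2 o2).
Proof.
apply/matrixP => i j; rewrite mxE; ord3 i; ord3 j; by congr (A _ _); apply/val_inj.
Qed.

Lemma mul_mk3 a b c d e f g h k a' b' c' d' e' f' g' h' k' :
  mk3 a b c d e f g h k * mk3 a' b' c' d' e' f' g' h' k' =
  mk3 (a*a' + b*d' + c*g') (a*b' + b*e' + c*h') (a*c' + b*f' + c*k')
      (d*a' + e*d' + f*g') (d*b' + e*e' + f*h') (d*c' + e*f' + f*k')
      (g*a' + h*d' + k*g') (g*b' + h*e' + k*h') (g*c' + h*f' + k*k').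
Proof.
apply/matrixP => i j; rewrite !mxE !big_ord_recl big_ord0 /= !mxE.
ord3 i; ord3 j => /=; ring.
Qed.

Lemma add_mk3 a b c d e f g h k a' b' c' d' e' f' g' h' k' :
  mk3 a b c d e f g h k + mk3 a' b' c' d' e' f' g' h' k' =
  mk3 (a+a') (b+b') (c+c') (d+d') (e+e') (f+f') (g+g') (h+h') (k+k').
Proof. apply/matrixP => i j; rewrite !mxE; ord3 i; ord3 j. Qed.

Lemma opp_mk3 a b c d e f g h k :
  - mk3 a b c d e f g h k = mk3 (-a) (-b) (-c) (-d) (-e) (-f) (-g) (-h) (-k).
Proof. apply/matrixP => i j; rewrite !mxE; ord3 i; ord3 j. Qed.

Lemma scale_mk3 x a b c d e f g h k :
  x *: mk3 a b c d e f g h k = mk3 (x*a) (x*b) (x*c) (x*d) (x*e) (x*f) (x*g) (x*h) (x*k).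
Proof. apply/matrixP => i j; rewrite !mxE; ord3 i; ord3 j. Qed.

Lemma one_mk3 : (1 : 'M[R]_3) = mk3 1 0 0 0 1 0 0 0 1.
Proof. apply/matrixP => i j; rewrite !mxE; ord3 i; ord3 j. Qed.

Lemma one_mk3' : (1%:M : 'M[R]_3) = mk3 1 0 0 0 1 0 0 0 1.
Proof. apply/matrixP => i j; rewrite !mxE; ord3 i; ord3 j. Qed.

Lemma tr_mk3 a b c d e f g h k :
  (mk3 a b c d e f g h k)^T = mk3 a d g b e h c f k.
Proof. apply/matrixP => i j; rewrite !mxE; ord3 i; ord3 j. Qed.

Lemma det_mk3 a b c d e f g h k :
  \det (mk3 a b c d e f g h k) = a*(e*k - f*h) - b*(d*k - f*g) + c*(d*h - e*g).
Proof.
rewrite (expand_det_row _ o0) !big_ord_recl big_ord0 /cofactor.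
rewrite !(expand_det_row _ ord0) !big_ord_recl !big_ord0 /cofactor !det_mx11 !mxE /=.
rewrite /bump /=; ring.
Qed.


Section Rot.
Variable B : 'M[R]_3.
Hypothesis HB : B ^+ 3 = - B.

Lemma BB : B * B = B ^+ 2. Proof. by rewrite expr2. Qed.
Lemma BB2 : B * B ^+ 2 = - B. Proof. by rewrite -exprS HB. Qed.
Lemma B2B : B ^+ 2 * B = - B. Proof. by rewrite -(exprSr B 2) HB. Qed.
Lemma B2B2 : B ^+ 2 * B ^+ 2 = - B ^+ 2.
Proof. by rewrite {1}expr2 -mulrA BB2 mulrN BB. Qed.

Lemma mulQ a b a' b' :
  (1 + a *: B + b *: B ^+ 2) * (1 + a' *: B + b' *: B ^+ 2) =
  1 + (a + a' - a * b' - a' * b) *: B + (b + b' + a * a' - b * b') *: B ^+ 2.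
Proof.
rewrite !mulrDl !mulrDr !mul1r !mulr1 -!scalerAl -!scalerAr !scalerA.
rewrite BB BB2 B2B B2B2.
apply/matrixP => i j; rewrite !mxE; ring.
Qed.

Hypothesis HBt : B^T = - B.

Definition Mr (th : R) : 'M[R]_3 := 1 + sin th *: B + (1 - cos th) *: B ^+ 2.

Lemma trQ a b : (1 + a *: B + b *: B ^+ 2)^T = 1 + (- a) *: B + b *: B ^+ 2.
Proof.
have E2 : (B ^+ 2)^T = B ^+ 2.
  by rewrite expr2 -mulmxE trmx_mul HBt mulmxE mulrN mulNr opprK.
apply/matrixP => i j; move/matrixP: HBt => H1; move/matrixP: E2 => H2.
rewrite !mxE; have := H1 i j; have := H2 i j; rewrite !mxE => -> ->.
rewrite eq_sym; ring.
Qed.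

Lemma orthM th : (Mr th)^T *m Mr th = 1%:M.
Proof.
rewrite /Mr trQ mulmxE mulQ.
have h := cos2Dsin2 th.
have -> : - sin th + sin th - - sin th * (1 - cos th) - sin th * (1 - cos th) = 0 by ring.
have -> : 1 - cos th + (1 - cos th) + - sin th * sin th - (1 - cos th) * (1 - cos th) = 0.
  lra.
by rewrite !scale0r !addr0.
Qed.

Lemma MrD th : Mr th = Mr (th / 2) * Mr (th / 2).
Proof.
rewrite /Mr mulQ; have E : th = th / 2 + th / 2 by field.
have h := cos2Dsin2 (th / 2).
rewrite {1 2}E sinD cosD; congr (1 + _ *: _ + _ *: _); lra.
Qed.

Lemma detM th : \det (Mr th) = 1.
Proof.
have h : \det (Mr (th / 2)) * \det (Mr (th / 2)) = 1.
  by rewrite -{1}det_tr -det_mulmx orthM det1.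
by rewrite MrD -mulmxE det_mulmx.
Qed.
End Rot.

Lemma Lambda_mk3 (w : 'cV[R]_3) : Lambda w =
  mk3 0 (- w o2 0) (w o1 0) (w o2 0) 0 (- w o0 0) (- w o1 0) (w o0 0) 0.
Proof.
apply/matrixP => i j; rewrite !mxE; ord3 i; ord3 j => /=;
  by [| congr (- w _ _); apply/val_inj | congr (w _ _); apply/val_inj].
Qed.

Lemma norm2E (w : 'cV[R]_3) : norm2 w = Num.sqrt (w o0 0 ^+ 2 + w o1 0 ^+ 2 + w o2 0 ^+ 2).
Proof.
rewrite /norm2 !big_ord_recl big_ord0 addr0 addrA; congr (Num.sqrt (w _ 0 ^+ 2 + w _ 0 ^+ 2 + w _ 0 ^+ 2)); exact/val_inj.
Qed.

Lemma Lambda_scale a (w : 'cV[R]_3) : Lambda (a *: w) = a *: Lambda w.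
Proof. by rewrite !Lambda_mk3 scale_mk3 !mxE !mulr0 !mulrN. Qed.

Lemma Lambda_tr (w : 'cV[R]_3) : (Lambda w)^T = - Lambda w.
Proof. by rewrite Lambda_mk3 tr_mk3 opp_mk3 !opprK oppr0. Qed.

Lemma Lambda_cube (w : 'cV[R]_3) :
  Lambda w ^+ 3 = - (w o0 0 ^+ 2 + w o1 0 ^+ 2 + w o2 0 ^+ 2) *: Lambda w.
Proof.
rewrite Lambda_mk3 !exprS expr0 mulr1 !mul_mk3 scale_mk3; congr mk3; ring.
Qed.
Definition ej (j : 'I_4) (i : nat) : R :=
  if (val j == 0%N) || (i == (val j).-1) then 1 else -1.

Lemma Rj_mk3 j : Rj R j = mk3 (ej j 0) 0 0 0 (ej j 1) 0 0 0 (ej j 2).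
Proof. apply/matrixP => i k; rewrite !mxE; ord3 i; ord3 k => /=; rewrite mxE ?mulr0n ?mulr1n //. Qed.

Lemma Rj_props j : (Rj R j)^T *m Rj R j = 1%:M /\ Rj R j * Rj R j = 1 /\ \det (Rj R j) = 1.
Proof.
rewrite Rj_mk3 tr_mk3 det_mk3 mulmxE mul_mk3 one_mk3 one_mk3'.
by case: j => [ [|[|[|[|?]]]] ?] //; rewrite /ej /=; split; try split;
  try (congr mk3; ring); ring.
Qed.
Lemma exp_Lambda (w : 'cV[R]_3) :
  exists B : 'M[R]_3, [/\ B ^+ 3 = - B, B^T = - B & expmx (Lambda w) = Mr B (norm2 w)].
Proof.
set S := w o0 0 ^+ 2 + w o1 0 ^+ 2 + w o2 0 ^+ 2.
have h0 := sqr_ge0 (w o0 0); have h1 := sqr_ge0 (w o1 0); have h2 := sqr_ge0 (w o2 0).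
have S0 : 0 <= S by rewrite /S; lra.
have thS : norm2 w ^+ 2 = S by rewrite norm2E sqr_sqrtr.
case: (eqVneq (norm2 w) 0) => Hth.
- have S00 : S = 0 by rewrite -thS Hth expr0n.
  have e0 : w o0 0 = 0 by apply/eqP; rewrite -sqrf_eq0; apply/eqP; rewrite /S in S00; lra.
  have e1 : w o1 0 = 0 by apply/eqP; rewrite -sqrf_eq0; apply/eqP; rewrite /S in S00; lra.
  have e2 : w o2 0 = 0 by apply/eqP; rewrite -sqrf_eq0; apply/eqP; rewrite /S in S00; lra.
  exists 0; split.
  + by rewrite expr0n oppr0.
  + by apply/matrixP => i j; rewrite !mxE oppr0.
  + have -> : Lambda w = 0 *: (0 : 'M[R]_3).
      rewrite scale0r Lambda_mk3 e0 e1 e2 oppr0; apply/matrixP => i j; rewrite !mxE; ord3 i; ord3 j.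
    by rewrite Hth rodrigues // expr0n oppr0.
- exists (Lambda ((norm2 w)^-1 *: w)); split.
  + rewrite Lambda_cube !mxE.
    have -> : ((norm2 w)^-1 * w o0 0) ^+ 2 + ((norm2 w)^-1 * w o1 0) ^+ 2 +
      ((norm2 w)^-1 * w o2 0) ^+ 2 = (norm2 w)^-1 ^+ 2 * norm2 w ^+ 2.
      by rewrite thS /S; ring.
    by rewrite -exprMn mulVf // expr1n scaleN1r.
  + exact: Lambda_tr.
  + rewrite -{1}[w](scale1r) -(mulfV Hth) -scalerA Lambda_scale rodrigues //.
    rewrite Lambda_cube !mxE.
    have -> : ((norm2 w)^-1 * w o0 0) ^+ 2 + ((norm2 w)^-1 * w o1 0) ^+ 2 +
      ((norm2 w)^-1 * w o2 0) ^+ 2 = (norm2 w)^-1 ^+ 2 * norm2 w ^+ 2.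
      by rewrite thS /S; ring.
    by rewrite -exprMn mulVf // expr1n scaleN1r.
Qed.

Lemma U_sub_SO3 j Q : @Uj R j Q -> @SO3 R Q.
Proof.
case=> w _ <-; have [B [HB HBt ->]] := exp_Lambda w.
have [H1 [H2 H3]] := Rj_props j.
split.
- by rewrite trmx_mul mulmxA -(mulmxA _ _ (Rj R j)) H1 mulmx1 orthM.
- by rewrite det_mulmx H3 detM // mul1r.
Qed.
Lemma mk3_inj a b c d e f g h k a' b' c' d' e' f' g' h' k' :
  mk3 a b c d e f g h k = mk3 a' b' c' d' e' f' g' h' k' ->
  (a = a' /\ b = b' /\ c = c') /\ (d = d' /\ e = e' /\ f = f') /\ (g = g' /\ h = h' /\ k = k').
Proof.
move/matrixP=> H.
have E i j : mk3 a b c d e f g h k i j = mk3 a' b' c' d' e' f' g' h' k' i j by apply: H.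
by move: (E o0 o0) (E o0 o1) (E o0 o2) (E o1 o0) (E o1 o1) (E o1 o2) (E o2 o0) (E o2 o1) (E o2 o2);
  rewrite !mxE /= => *.
Qed.

Definition vec3 (x y z : R) : 'cV[R]_3 := \col_i nth 0 [:: x; y; z] i.

Lemma Lambda_vec3 x y z : Lambda (vec3 x y z) = mk3 0 (- z) y z 0 (- x) (- y) x 0.
Proof. by rewrite Lambda_mk3 !mxE. Qed.

Lemma norm2_vec3 x y z : norm2 (vec3 x y z) = Num.sqrt (x ^+ 2 + y ^+ 2 + z ^+ 2).
Proof. by rewrite norm2E !mxE. Qed.

Lemma core_ent a b c d e f g h k :
  (mk3 a b c d e f g h k)^T *m mk3 a b c d e f g h k = 1%:M ->
  mk3 a b c d e f g h k *m (mk3 a b c d e f g h k)^T = 1%:M ->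
  \det (mk3 a b c d e f g h k) = 1 ->
  let c0 := (a + e + k - 1) / 2 in
  let v0 := (h - f) / 2 in let v1 := (c - g) / 2 in let v2 := (d - b) / 2 in
  v0 ^+ 2 + v1 ^+ 2 + v2 ^+ 2 = 1 - c0 ^+ 2 /\
  mk3 0 (- v2) v1 v2 0 (- v0) (- v1) v0 0 * mk3 0 (- v2) v1 v2 0 (- v0) (- v1) v0 0 =
  (1 + c0) *: (mk3 a b c d e f g h k - 1 - mk3 0 (- v2) v1 v2 0 (- v0) (- v1) v0 0).
Proof.
move=> H1 H2 Hd c0 v0 v1 v2.
set M := mk3 a b c d e f g h k in H1 H2 Hd *.
have H2' : M * M^T = 1 by rewrite -mulmxE H2.
set C := mk3 (e*k - f*h) (-(d*k - f*g)) (d*h - e*g) (-(b*k - c*h)) (a*k - c*g) (-(a*h - b*g))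
   (b*f - c*e) (-(a*f - c*d)) (a*e - b*d).
have HC : C^T * M = 1.
  by rewrite /C /M tr_mk3 mul_mk3 one_mk3 -Hd det_mk3; congr mk3; ring.
have HC2 : C^T = M^T by rewrite -[C^T]mulr1 -H2' mulrA HC mul1r.
rewrite /M /C !tr_mk3 !mulmxE !mul_mk3 one_mk3' det_mk3 in H1 H2 Hd HC2.
move/mk3_inj: H1 => [ [x1 [x2 x3]] [ [x4 [x5 x6]] [x7 [x8 x9]]]].
move/mk3_inj: H2 => [ [r1 [r2 r3]] [ [r4 [r5 r6]] [r7 [r8 r9]]]].
move/mk3_inj: HC2 => [ [c1 [c2 c3]] [ [c4 [c5 c6]] [c7 [c8 c9]]]].
rewrite /c0 /v0 /v1 /v2 /M; split; first lra.
rewrite one_mk3 mul_mk3 !opp_mk3 !add_mk3 scale_mk3; congr mk3; lra.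
Qed.
Lemma core2 a b c d e f g h k :
  (mk3 a b c d e f g h k)^T *m mk3 a b c d e f g h k = 1%:M ->
  mk3 a b c d e f g h k *m (mk3 a b c d e f g h k)^T = 1%:M ->
  \det (mk3 a b c d e f g h k) = 1 -> -1 < a + e + k ->
  exists w : 'cV[R]_3, norm2 w < pi /\ expmx (Lambda w) = mk3 a b c d e f g h k.
Proof.
move=> H1 H2 Hd Ht.
have := core_ent _ _ _ _ _ _ _ _ _ H1 H2 Hd.
set c0 := (a + e + k - 1) / 2; set v0 := (h - f) / 2; set v1 := (c - g) / 2; set v2 := (d - b) / 2.
move=> [I1 K1].
have hc0 : -1 < c0 by rewrite /c0; lra.
have hv0 := sqr_ge0 v0; have hv1 := sqr_ge0 v1; have hv2 := sqr_ge0 v2.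
have hc1 : c0 <= 1 by nra.
have hc : -1 <= c0 <= 1 by apply/andP; split; lra.
set th := acos c0.
have cth : cos th = c0 by apply: acosK; rewrite in_itv /=.
pose s : R := Num.sqrt (1 - c0 ^+ 2).
have sth : sin th = s by rewrite /th sin_acos.
have s2 : s ^+ 2 = 1 - c0 ^+ 2 by rewrite sqr_sqrtr //; lra.
have s0 : 0 <= s by apply: sqrtr_ge0.
have th0 : 0 <= th by apply: acos_ge0.
have thpi : th < pi by apply: acos_ltpi; apply/andP; split.
case: (eqVneq s 0) => Hs.
- have Hc1 : c0 = 1.
    have : (c0 - 1) * (c0 + 1) = 0 by move: s2; rewrite Hs expr0n /=; lra.
    by move/eqP; rewrite mulf_eq0 => /orP [/eqP|/eqP]; lra.
  have Hvv : v0 ^+ 2 + v1 ^+ 2 + v2 ^+ 2 = 0 by rewrite I1 Hc1; lra.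
  have e0 : v0 = 0 by apply/eqP; rewrite -sqrf_eq0; apply/eqP; lra.
  have e1 : v1 = 0 by apply/eqP; rewrite -sqrf_eq0; apply/eqP; lra.
  have e2 : v2 = 0 by apply/eqP; rewrite -sqrf_eq0; apply/eqP; lra.
  exists 0; split.
    by rewrite norm2E !mxE expr0n /= !addr0 sqrtr0; apply: pi_gt0.
  have -> : Lambda (0 : 'cV[R]_3) = 0 *: (0 : 'M[R]_3).
    by rewrite scale0r Lambda_mk3 !mxE oppr0; apply/matrixP => i j; rewrite !mxE; ord3 i; ord3 j.
  rewrite rodrigues ?expr0n ?oppr0 // !scaler0 !addr0.
  move: K1; rewrite e0 e1 e2 Hc1 one_mk3 mul_mk3 !opp_mk3 !add_mk3 scale_mk3.
  move/mk3_inj => [ [x1 [x2 x3]] [ [x4 [x5 x6]] [x7 [x8 x9]]]].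
  congr mk3; lra.
- have sp : 0 < s by rewrite lt_def Hs.
  exists (th *: (s^-1 *: vec3 v0 v1 v2)); split.
    rewrite norm2E !mxE /=.
    have -> : (th * (s^-1 * v0)) ^+ 2 + (th * (s^-1 * v1)) ^+ 2 + (th * (s^-1 * v2)) ^+ 2
       = th ^+ 2 * ((s^-1 * s) ^+ 2).
      by rewrite [in RHS]exprMn s2 -I1; ring.
    by rewrite mulVf // expr1n mulr1 sqrtr_sqr ger0_norm.
  rewrite !Lambda_scale.
  set L := Lambda (vec3 v0 v1 v2).
  have HL : L ^+ 3 = (- (s * s)) *: L.
    rewrite /L Lambda_cube !mxE /=; congr (- _ *: _); by rewrite -expr2 s2 -I1.
  have K1' : L * L = (1 + c0) *: (mk3 a b c d e f g h k - 1 - L) by rewrite /L Lambda_vec3.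
  rewrite rodrigues; last first.
    rewrite exprZn HL scalerA -[RHS]scaleNr; congr (_ *: _). field. exact: Hs.
  rewrite sth cth scalerA mulfV // scale1r exprZn scalerA (expr2 L) K1' scalerA.
  have -> : (1 - c0) * (s^-1 ^+ 2) * (1 + c0) = 1.
    have -> : (1 - c0) * (s^-1 ^+ 2) * (1 + c0) = s^-1 ^+ 2 * s ^+ 2 by rewrite s2; ring.
    by rewrite -exprMn mulVf // expr1n.
  by rewrite scale1r; apply/matrixP => i j; rewrite !mxE; ring.
Qed.

Lemma core (P : 'M[R]_3) : @SO3 R P -> -1 < P o0 o0 + P o1 o1 + P o2 o2 ->
  exists w : 'cV[R]_3, norm2 w < pi /\ expmx (Lambda w) = P.
Proof.
case=> HO Hd Ht.
have HO' : P *m P^T = 1%:M by apply: mulmx1C.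
have E := mk3E P.
rewrite E in HO HO' Hd.
have [w [Hw Hexp]] := core2 _ _ _ _ _ _ _ _ _ HO HO' Hd Ht.
by exists w; split => //; rewrite Hexp -E.
Qed.
Lemma trRj j (Q : 'M[R]_3) : (Rj R j *m Q) o0 o0 + (Rj R j *m Q) o1 o1 + (Rj R j *m Q) o2 o2 =
  ej j 0 * Q o0 o0 + ej j 1 * Q o1 o1 + ej j 2 * Q o2 o2.
Proof. rewrite [in LHS](mk3E Q) Rj_mk3 mulmxE mul_mk3 !mxE /=; ring. Qed.

Lemma SO3_sub_U Q : @SO3 R Q -> exists j, @Uj R j Q.
Proof.
move=> HQ.
have via (j : 'I_4) : -1 < ej j 0 * Q o0 o0 + ej j 1 * Q o1 o1 + ej j 2 * Q o2 o2 -> @Uj R j Q.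
  rewrite -trRj => Ht.
  have [H1 [H2 H3]] := Rj_props j; case: (HQ) => HO Hd.
  have HP : @SO3 R (Rj R j *m Q).
    split; first by rewrite trmx_mul mulmxA -(mulmxA _ _ (Rj R j)) H1 mulmx1 HO.
    by rewrite det_mulmx H3 Hd mul1r.
  have [w [Hw Hexp]] := core _ HP Ht.
  exists w => //; rewrite Hexp mulmxA mulmxE H2 mul1r //.
case: (ltrP (-1) (Q o0 o0 + Q o1 o1 + Q o2 o2)) => h0.
  by exists (@Ordinal 4 0 isT); apply: via; rewrite /ej /=; lra.
case: (ltrP (-1) (Q o0 o0 - Q o1 o1 - Q o2 o2)) => h1.
  by exists (@Ordinal 4 1 isT); apply: via; rewrite /ej /=; lra.
case: (ltrP (-1) (- Q o0 o0 + Q o1 o1 - Q o2 o2)) => h2.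
  by exists (@Ordinal 4 2 isT); apply: via; rewrite /ej /=; lra.
by exists (@Ordinal 4 3 isT); apply: via; rewrite /ej /=; lra.
Qed.
End S.

Theorem mainTheorem5 (R : realType) :
  (\bigcup_(j in [set: 'I_4]) @Uj R j = @SO3 R) /\
  (\bigcup_(j in [set: 'I_4]) @calUj R j = @SE3 R).
Proof.
split.
- apply/seteqP; split => Q.
  + by case=> j _ HU; apply: U_sub_SO3 _ _ _ HU.
  + by move=> HQ; have [j Hj] := SO3_sub_U _ _ HQ; exists j.
- apply/seteqP; split => T.
  + case=> j _ [Q [p [HU ->]]]; exists Q, p; split => //; exact: U_sub_SO3 _ _ _ HU.
  + case=> Q [p [HQ ->]]; have [j Hj] := SO3_sub_U _ _ HQ; exists j => //; by exists Q, p.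
Qed.
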